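(* Let $S^\star\in\mathbb R^{d\times d}$ have at most $s$ nonzero entries in total and at most $\alpha d$ nonzero entries in every row and every column, let $\Delta^\star,\hat\Delta\in\mathbb R^{d\times d}$ be arbitrary, and let $R^\star=\Delta^\star-S^\star$. Let $\hat\alpha\ge\alpha$, let $\hat s\ge s$ be an integer, and let $S^0=\mathcal T_{\hat\alpha}\{\mathcal J_{\hat s}(\hat\Delta)\}$. Then $$\|S^0-S^\star\|_{\infty,\infty}\le3\|\hat\Delta-\Delta^\star\|_{\infty,\infty}+3\|R^\star\|_{\infty,\infty},\qquad \|S^0-S^\star\|_F\le(2\hat s)^{1/2}\|S^0-S^\star\|_{\infty,\infty}.$$
   Context: $\|A\|_{\infty,\infty}=\max_{i,j}|A_{ij}|$; $\|\cdot\|_F$ is the Frobenius norm. $\mathcal J_s(A)$ keeps the $s$ entries of $A$ largest in absolute value and sets the others to zero; $\mathcal T_\alpha(A)$ keeps $A_{ij}$ iff $|A_{ij}|$ is among the $\lfloor\alpha d\rfloor$ largest absolute values in row $i$ and also among the $\lfloor\alpha d\rfloor$ largest absolute values in column $j$, and sets the other entries to zero (ties broken arbitrarily). *)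

(* Defs.v *)
(* Scalars: R : archiRcfType (real closed, archimedean:
   needed for the floor and the square root). *)
From HB Require Import structures.
From mathcomp Require Import all_boot all_order all_algebra.
Set Implicit Arguments. Unset Strict Implicit. Unset Printing Implicit Defensive.
Import Order.TTheory GRing.Theory Num.Theory.
Local Open Scope ring_scope.

Definition maxnorm (R : archiRcfType) (d : nat) (A : 'M[R]_d) : R :=
  \big[Num.max/0]_(i < d) \big[Num.max/0]_(j < d) `|A i j|.

Definition frob (R : archiRcfType) (d : nat) (A : 'M[R]_d) : R :=
  Num.sqrt (\sum_(i < d) \sum_(j < d) (A i j) ^+ 2).

(* K is a set of k elements of T (or all of T if k >= #|T|) carrying the
   largest values of f: every kept value dominates every discarded value.
   (ties broken arbitrarily = any such K) *)
Definition topk_set (R : archiRcfType) (T : finType) (f : T -> R) (k : nat)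
  (K : {set T}) : Prop :=
  #|K| = minn k #|T| /\ (forall p q, p \in K -> q \notin K -> f q <= f p).

(* B is an admissible value of J_s(A) *)
Definition is_J (R : archiRcfType) (d : nat) (s : nat) (A B : 'M[R]_d) : Prop :=
  exists K : {set 'I_d * 'I_d},
    topk_set (fun p => `|A p.1 p.2|) s K /\
    (forall i j, B i j = if (i, j) \in K then A i j else 0).

(* B is an admissible value of T_alpha(A), with k = floor(alpha d)
   (truncn gives the floor for nonnegative arguments, 0 otherwise) *)
Definition is_T (R : archiRcfType) (d : nat) (alpha : R) (A B : 'M[R]_d) : Prop :=
  let k := Num.truncn (alpha * d%:R) in
  exists (Rw Cl : 'I_d -> {set 'I_d}),
    (forall i, topk_set (fun j => `|A i j|) k (Rw i)) /\
    (forall j, topk_set (fun i => `|A i j|) k (Cl j)) /\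
    (forall i j, B i j = if (j \in Rw i) && (i \in Cl j) then A i j else 0).

(* Main.v *)
Require Import Defs.
From HB Require Import structures.
From mathcomp Require Import all_boot all_order all_algebra.
From mathcomp Require Import zify ring lra.
Import Order.TTheory GRing.Theory Num.Theory.
Local Open Scope ring_scope.

Section Aux.
Variable R : archiRcfType.

Lemma bigmax_ge (I : eqType) (r : seq I) (F : I -> R) i0 :
  i0 \in r -> F i0 <= \big[Num.max/0]_(i <- r) F i.
Proof.
elim: r => // a r IH; rewrite inE big_cons => /orP[/eqP->|/IH h].
  by rewrite le_max lexx.
by rewrite le_max h orbT.
Qed.

Lemma bigmax_ge0 (I : eqType) (r : seq I) (F : I -> R) :
  0 <= \big[Num.max/0]_(i <- r) F i.
Proof.
elim: r => [|a r IH]; first by rewrite big_nil.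
by rewrite big_cons le_max IH orbT.
Qed.

Lemma maxnorm_ge d (A : 'M[R]_d) i j : `|A i j| <= maxnorm A.
Proof.
rewrite /maxnorm; apply: le_trans; last first.
  exact: (@bigmax_ge _ _ (fun i => \big[Num.max/0]_(j < d) `|A i j|) _ (mem_index_enum i)).
exact: (@bigmax_ge _ _ (fun j => `|A i j|) _ (mem_index_enum j)).
Qed.

Lemma maxnorm_ge0 d (A : 'M[R]_d) : 0 <= maxnorm A.
Proof. exact: bigmax_ge0. Qed.

Lemma find_out (T : finType) (K Sup : {set T}) (k : nat) x :
  #|K| = minn k #|T| -> (#|Sup| <= k)%N -> x \in Sup -> x \notin K ->
  exists2 y, y \in K & y \notin Sup.
Proof.
move=> hK hS xS xK; apply/subsetPn/negP => sub.
have pr : K \proper Sup by apply/properP; split => //; exists x.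
have hN : (#|Sup| <= #|T|)%N by apply: max_card.
have := proper_card pr; lia.
Qed.

Lemma bigmax_le (I : eqType) (r : seq I) (F : I -> R) c :
  0 <= c -> (forall i, F i <= c) -> \big[Num.max/0]_(i <- r) F i <= c.
Proof.
move=> c0 hF; elim: r => [|a r IH]; first by rewrite big_nil.
by rewrite big_cons ge_max hF IH.
Qed.

Lemma maxnorm_le d (A : 'M[R]_d) c :
  0 <= c -> (forall i j, `|A i j| <= c) -> maxnorm A <= c.
Proof.
move=> c0 h; apply: bigmax_le => // i; exact: bigmax_le.
Qed.

End Aux.

Theorem mainTheorem7 (R : archiRcfType) (d s : nat) (alpha : R)
  (Sstar Dstar Dhat : 'M[R]_d) (alphahat : R) (shat : nat)
  (J S0 : 'M[R]_d) :
  (#|[set p : 'I_d * 'I_d | Sstar p.1 p.2 != 0%R]| <= s)%N ->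
  (forall i : 'I_d, (#|[set j : 'I_d | Sstar i j != 0]|)%:R <= alpha * d%:R) ->
  (forall j : 'I_d, (#|[set i : 'I_d | Sstar i j != 0]|)%:R <= alpha * d%:R) ->
  alpha <= alphahat ->
  (s <= shat)%N ->
  is_J shat Dhat J ->
  is_T alphahat J S0 ->
  maxnorm (S0 - Sstar) <= 3 * maxnorm (Dhat - Dstar) + 3 * maxnorm (Dstar - Sstar)
  /\ frob (S0 - Sstar) <= Num.sqrt (2 * shat%:R) * maxnorm (S0 - Sstar).
Proof.
move=> hs hrow hcol haa hss [K [[cK dK] hJ]] [Rw [Cl [hR [hC hS0]]]].
set k := Num.truncn (alphahat * d%:R) in hR hC.
set E := maxnorm (Dhat - Dstar); set e := maxnorm (Dstar - Sstar).
have E0 : 0 <= E by apply: maxnorm_ge0.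
have e0 : 0 <= e by apply: maxnorm_ge0.
have key : forall i j, `|Dhat i j - Sstar i j| <= E + e.
  move=> i j.
  have -> : Dhat i j - Sstar i j = (Dhat - Dstar) i j + (Dstar - Sstar) i j.
    by rewrite !mxE; ring.
  apply: le_trans (ler_normD _ _) _; apply: lerD; exact: maxnorm_ge.
have key0 : forall i j, Sstar i j = 0 -> `|Dhat i j| <= E + e.
  by move=> i j h; have := key i j; rewrite h subr0.
have keyJ : forall i j, `|J i j| <= `|Dhat i j|.
  by move=> i j; rewrite hJ; case: ifP => _; rewrite ?normr0 ?normr_ge0 ?lexx.
have claim : forall i j, Sstar i j != 0 ->
    ~~ ((j \in Rw i) && (i \in Cl j) && ((i,j) \in K)) -> `|Dhat i j| <= E + e.
  move=> i j nz.
  case: (boolP ((i,j) \in K)) => hK; last first.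
    have [p pK pS] := @find_out _ K [set p : 'I_d * 'I_d | Sstar p.1 p.2 != 0]
       shat (i,j) cK (leq_trans hs hss) ltac:(by rewrite inE) hK.
    have h := dK _ _ pK hK; simpl in h.
    move=> _; apply: le_trans h _; apply: key0; by move: pS; rewrite inE negbK => /eqP.
  move=> hr0; have : ~~ (j \in Rw i) || ~~ (i \in Cl j) by move: hr0; case: (j \in Rw i); case: (i \in Cl j).
  case/orP => hr.
    have hle : alpha * d%:R <= alphahat * d%:R by apply: ler_wpM2r.
    have ad0 : 0 <= alphahat * d%:R := le_trans (ler0n _ _) (le_trans (hrow i) hle).
    have hSr : (#|[set j' : 'I_d | Sstar i j' != 0%R]| <= k)%N.
      by rewrite /k truncn_ge_nat //; apply: le_trans (hrow i) hle.
    have [j' pK pS] := @find_out _ (Rw i) _ k j (proj1 (hR i)) hSr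
       ltac:(by rewrite inE) hr.
    have h := (proj2 (hR i)) _ _ pK hr; simpl in h.
    rewrite (hJ i j) hK in h.
    apply: le_trans h _; apply: le_trans (keyJ i j') _; apply: key0.
    by move: pS; rewrite inE negbK => /eqP.
  have hle : alpha * d%:R <= alphahat * d%:R by apply: ler_wpM2r.
  have ad0 : 0 <= alphahat * d%:R := le_trans (ler0n _ _) (le_trans (hcol j) hle).
  have hSr : (#|[set i' : 'I_d | Sstar i' j != 0%R]| <= k)%N.
    by rewrite /k truncn_ge_nat //; apply: le_trans (hcol j) hle.
  have [i' pK pS] := @find_out _ (Cl j) _ k i (proj1 (hC j)) hSr
     ltac:(by rewrite inE) hr.
  have h := (proj2 (hC j)) _ _ pK hr; simpl in h.
  rewrite (hJ i j) hK in h.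
  apply: le_trans h _; apply: le_trans (keyJ i' j) _; apply: key0.
  by move: pS; rewrite inE negbK => /eqP.
split.
  apply: maxnorm_le; first lra.
  move=> i j; rewrite !mxE hS0 hJ.
  apply: (@le_trans _ _ (2 * (E + e))); last lra.
  case: (eqVneq (Sstar i j) 0) => hz.
    rewrite hz subr0.
    case: ifP => _; last by rewrite normr0; lra.
    case: ifP => _; last by rewrite normr0; lra.
    have := key0 i j hz; lra.
  case: (boolP ((j \in Rw i) && (i \in Cl j) && ((i,j) \in K))) => c.
    move: c => /andP[-> ->]; have := key i j; lra.
  have -> : (if (j \in Rw i) && (i \in Cl j)
             then (if (i, j) \in K then Dhat i j else 0) else 0) = 0.
    by move: c; case: (j \in Rw i); case: (i \in Cl j); case: ((i,j) \in K).
  have h1 := claim i j hz c; have h2 := key i j.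
  rewrite sub0r normrN.
  have -> : Sstar i j = Dhat i j - (Dhat i j - Sstar i j) by ring.
  apply: le_trans (ler_normB _ _) _; lra.
rewrite /frob; set m := maxnorm (S0 - Sstar).
have m0 : 0 <= m by apply: maxnorm_ge0.
set Sup := [set p : 'I_d * 'I_d | Sstar p.1 p.2 != 0].
set U := K :|: Sup.
have hU : (#|U| <= 2 * shat)%N.
  case: (leq_card_setU K Sup) => h _.
  have h2 : (#|K| <= shat)%N by rewrite cK geq_minl.
  have h3 : (#|Sup| <= shat)%N := leq_trans hs hss.
  by rewrite mul2n -addnn; apply: leq_trans h (leq_add h2 h3).
have out : forall p, p \notin U -> (S0 - Sstar) p.1 p.2 = 0.
  move=> [i j]; rewrite !inE negb_or => /andP[hK]; rewrite negbK => /eqP hz.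
  by rewrite !mxE /= hS0 hJ (negbTE hK) hz; case: ifP; rewrite subr0.
have hF : forall p, (S0 - Sstar) p.1 p.2 ^+ 2 <= m ^+ 2.
  move=> p; rewrite -real_normK ?num_real // !expr2.
  by apply: ler_pM; rewrite ?normr_ge0 ?maxnorm_ge.
rewrite -[m]ger0_norm // -sqrtr_sqr -sqrtrM; last by rewrite mulr_ge0 ?ler0n.
apply: ler_wsqrtr.
rewrite pair_big /= (bigID (fun p => p \in U)) /= [X in _ + X]big1 ?addr0; last first.
  by move=> p /out ->; rewrite expr0n.
apply: le_trans (ler_sum _ (fun p _ => hF p)) _.
rewrite sumr_const -[m ^+ 2 *+ _]mulr_natl; apply: ler_wpM2r; first by rewrite exprn_ge0.
by rewrite -natrM ler_nat.
Qed.
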